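(* Let $n\ge 3$ and let $G$ be a simple graph on $n$ vertices that contains no doubly chorded cycle. Then $\rho(G)\le \tfrac{1}{2}+\sqrt{2n-\tfrac{15}{4}}$, with equality if and only if $G\cong K_{1,1,n-2}$.
   Context: All graphs are finite and simple. $\rho(G)$ denotes the spectral radius of $G$, i.e. the largest eigenvalue of its adjacency matrix. For a cycle $C$ in $G$, a chord of $C$ is an edge of $G$ joining two vertices of $C$ that is not itself an edge of $C$. A doubly chorded cycle is a cycle with at least two chords; $G$ contains a doubly chorded cycle if some cycle of $G$ has at least two chords in $G$. $K_{1,1,n-2}$ is the complete tripartite graph with parts of sizes $1,1,n-2$. *)

(* Defs.v *)
From HB Require Import structures.
From mathcomp Require Import all_boot all_order all_algebra.
From mathcomp Require Import classical_sets reals.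
Set Implicit Arguments. Unset Strict Implicit. Unset Printing Implicit Defensive.
Import Order.TTheory GRing.Theory Num.Theory.
Local Open Scope ring_scope.

Definition simple_graph (n : nat) (e : rel 'I_n) : Prop :=
  symmetric e /\ irreflexive e.

Definition adjmx (R : realType) (n : nat) (e : rel 'I_n) : 'M[R]_n :=
  \matrix_(i, j) (e i j)%:R.

Definition spec_rad (R : realType) (n : nat) (e : rel 'I_n) : R :=
  sup [set a : R | eigenvalue (adjmx R e) a].

Definition is_cycle (n : nat) (e : rel 'I_n) (s : seq 'I_n) : bool :=
  [&& uniq s, (2 < size s)%N & cycle e s].

Definition is_chord (n : nat) (e : rel 'I_n) (s : seq 'I_n) (x y : 'I_n) : bool :=
  [&& x \in s, y \in s, e x y, y != next s x & x != next s y].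

Definition has_doubly_chorded_cycle (n : nat) (e : rel 'I_n) : Prop :=
  exists s : seq 'I_n, is_cycle e s /\
    exists x1 y1 x2 y2 : 'I_n,
      [/\ is_chord e s x1 y1, is_chord e s x2 y2 &
          (finset.setU (finset.set1 x1) (finset.set1 y1) != finset.setU (finset.set1 x2) (finset.set1 y2))].

(* K_{1,1,n-2} on 'I_n: parts {0}, {1}, {2,...,n-1}. *)
Definition K11n (n : nat) : rel 'I_n :=
  fun i j => (i != j) && ((val i < 2)%N || (val j < 2)%N).

Definition graph_iso (n : nat) (e1 e2 : rel 'I_n) : Prop :=
  exists f : 'I_n -> 'I_n, bijective f /\ forall i j, e2 (f i) (f j) = e1 i j.

(* Main.v *)
Require Import Defs.
From HB Require Import structures.
From mathcomp Require Import all_boot all_order all_algebra.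
From mathcomp Require Import classical_sets reals.
From mathcomp Require Import all_fingroup zify ring lra.
From Stdlib Require Import Classical.
Import Order.TTheory GRing.Theory Num.Theory.
Set Implicit Arguments. Unset Strict Implicit. Unset Printing Implicit Defensive.


Definition ipath n (h : rel 'I_n) k (w : nat -> 'I_n) :=
  (forall i, i < k -> h (w i) (w i.+1)) /\
  (forall i j, i <= k -> j <= k -> w i = w j -> i = j).

Lemma ipath_bound n (h : rel 'I_n) k w : ipath h k w -> k < n.
Proof.
case=> _ inj.
have injf : injective (fun i : 'I_k.+1 => w i).
  by move=> i j /inj => H; apply: val_inj; apply: H; rewrite -ltnS ltn_ord.
by have := @leq_card _ _ _ injf; rewrite !card_ord.
Qed.

Lemma ex_max_prop (P : nat -> Prop) m b : P m -> (forall k, P k -> k <= b) ->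
  exists k, P k /\ forall k', P k' -> k' <= k.
Proof.
move=> Pm Hb; have : forall d m, P m -> (forall k, P k -> k <= m + d) ->
   exists k, P k /\ forall k', P k' -> k' <= k.
  elim=> [|d IH] m0 Pm0 Hb0.
    by exists m0; split=> // k' /Hb0; rewrite addn0.
  case: (classic (exists k, P k /\ m0 < k)) => [[k [Pk lt]]|N].
    apply: (IH k Pk) => k' /Hb0; lia.
  exists m0; split=> // k' Pk'; rewrite leqNgt; apply/negP=> lt; apply: N; by exists k'.
move/(_ (b - m) m Pm) => H; apply: H => k /Hb; lia.
Qed.

Lemma longest n (h : rel 'I_n) : irreflexive h -> (exists x y, h x y) ->
  exists k w, [/\ ipath h k w, 0 < k & forall k' w', ipath h k' w' -> k' <= k].
Proof.
move=> irr [x [y hxy]].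
have P1 : exists w, ipath h 1 w.
  exists (fun i => if i is 0 then x else y); split.
    by case=> // _; rewrite hxy.
  have xy : x != y by apply/negP=> /eqP E; rewrite E irr in hxy.
  case=> [|[|i]] [|[|j]] //= _ _ E; by rewrite E eqxx in xy.
have [k [[w Pw] M]] := ex_max_prop (P := fun k => exists w, ipath h k w) P1
   (b := n) (fun k '(ex_intro w Pw) => ltnW (ipath_bound Pw)).
exists k, w; split=> //.
  by apply: (M 1).
by move=> k' w' Pw'; apply: M; exists w'.
Qed.

Lemma max_nbr n (h : rel 'I_n) k w y : symmetric h -> ipath h k w ->
  (forall k' w', ipath h k' w' -> k' <= k) -> h (w 0) y -> exists2 i, i <= k & y = w i.
Proof.
move=> sym [Pe Pi] M hy.
apply: NNPP => N.
have : ipath h k.+1 (fun i => if i is i'.+1 then w i' else y).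
  split.
    case=> [|i] /=; first by rewrite sym.
    by move=> lt; apply: Pe.
  case=> [|i] [|j] //= Hi Hj.
  - move=> E; exfalso; apply: N; exists j => //; lia.
  - move=> E; exfalso; apply: N; exists i => //; lia.
  - by move=> /Pi -> //.
by move/M; rewrite ltnn.
Qed.

Definition rotf (a i : nat) := if i < a then a.-1 - i else i.

Lemma rot_path n (h : rel 'I_n) k w a : symmetric h -> ipath h k w -> 0 < a <= k ->
  h (w 0) (w a) -> ipath h k (fun i => w (rotf a i)).
Proof.
move=> sym [Pe Pi] /andP [a0 ak] ha; rewrite /rotf; split.
  move=> i ik.
  case: (ltnP i.+1 a) => H1.
    have -> : i < a by lia.
    have -> : a.-1 - i = (a.-1 - i.+1).+1 by lia.
    rewrite sym; apply: Pe; lia.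
  case: (ltnP i a) => H2.
    have -> : a.-1 - i = 0 by lia.
    by have -> : i.+1 = a by lia.
  by apply: Pe.
move=> i j ik jk.
case: (ltnP i a) => H1; case: (ltnP j a) => H2 E; have := Pi _ _ _ _ E; lia.
Qed.

Lemma rot_in a k i : i <= k -> a <= k -> rotf a i <= k.
Proof. rewrite /rotf; case: ifP; lia. Qed.


Lemma dcc_prefix n (e : rel 'I_n) k w c i1 j1 i2 j2 :
  ipath e k w -> 2 <= c <= k -> e (w c) (w 0) ->
  i1 < j1 <= c -> i1.+1 < j1 -> ~~ ((i1 == 0) && (j1 == c)) -> e (w i1) (w j1) ->
  i2 < j2 <= c -> i2.+1 < j2 -> ~~ ((i2 == 0) && (j2 == c)) -> e (w i2) (w j2) ->
  (i1 != i2) || (j1 != j2) -> has_doubly_chorded_cycle e.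
Proof.
move=> [Pe Pi] /andP[c2 ck] ec /andP[ij1 jc1] ij1' nc1 e1 /andP[ij2 jc2] ij2' nc2 e2 dif.
have weq a b : a <= c -> b <= c -> (w a == w b) = (a == b).
  move=> ac bc; apply/eqP/eqP => [E|->] //; apply: Pi E; lia.
set s := mkseq w c.+1.
have sE : s = w 0 :: map w (iota 1 c) by [].
have nth_s i : i <= c -> nth (w 0) s i = w i by move=> ic; rewrite nth_mkseq.
have us : uniq s.
  rewrite /s /mkseq map_inj_in_uniq ?iota_uniq // => a b; rewrite !mem_iota => Ha Hb E.
  apply: Pi E; lia.
have mem_s i : i <= c -> w i \in s.
  by move=> ic; rewrite /s /mkseq map_f // mem_iota; lia.
have sz : size s = c.+1 by rewrite size_mkseq.
have nxt i : i <= c -> next s (w i) = if i < c then w i.+1 else w 0.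
  move=> ic; rewrite next_nth mem_s // -{2}(nth_s i ic) index_uniq ?sz //.
  rewrite /s /mkseq /=.
  case: ifP => H.
    by rewrite (nth_map 0) ?size_iota // nth_iota // add1n.
  by rewrite nth_default // size_map size_iota; lia.
have chord i j : i < j <= c -> i.+1 < j -> ~~ ((i == 0) && (j == c)) -> e (w i) (w j) ->
    is_chord e s (w i) (w j).
  move=> /andP[ij jc] ij' nc eij.
  have ni := nxt i ltac:(lia); have nj := nxt j jc.
  have ic : i < c by lia.
  rewrite /is_chord ni nj ic !mem_s ?eij ?weq /=; try lia.
  case: ifP => H; rewrite weq; lia.
exists s; split.
  rewrite /is_cycle us sz ltnS c2 (cycle_path (w 0)).
  have -> : last (w 0) s = w c by rewrite (last_nth (w 0)) sz /= nth_s.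
  apply/(pathP (w 0)) => i; rewrite sz => ic.
  case: i ic => [|i] ic.
    by rewrite [nth _ (_ :: _) 0]/= nth_s.
  rewrite [nth _ (_ :: _) _]/= !nth_s; try lia; apply: Pe; lia.
exists (w i1), (w j1), (w i2), (w j2); split.
- by apply: chord => //; rewrite ij1 jc1.
- by apply: chord => //; rewrite ij2 jc2.
apply/negP => /eqP E.
have m x : (x \in [set w i1] :|: [set w j1]) = (x \in [set w i2] :|: [set w j2]) by rewrite E.
have := m (w i1); have := m (w j1); have := m (w i2); have := m (w j2).
rewrite !inE !weq; lia.
Qed.


Lemma ipath_sub n (e h : rel 'I_n) k w : (forall x y, h x y -> e x y) ->
  ipath h k w -> ipath e k w.
Proof. by move=> he [P1 P2]; split=> // i /P1 /he. Qed.

Lemma deg3_dcc n (e h : rel 'I_n) : symmetric h -> irreflexive h ->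
  (forall x y, h x y -> e x y) -> (exists x y, h x y) ->
  (forall x, (exists y, h x y) -> forall y1 y2, exists z, [/\ h x z, z != y1 & z != y2]) ->
  has_doubly_chorded_cycle e.
Proof.
move=> sym irr he ex D3.
have [k [w [Pw k0 M]]] := longest irr ex.
have Pw' := Pw; case: Pw' => [Pe Pi].
have weq a b : a <= k -> b <= k -> (w a == w b) = (a == b).
  move=> ac bc; apply/eqP/eqP => [E|->] //; apply: Pi E; lia.
have h01 := Pe 0 k0.
have [z1 [hz1 z11 _]] := D3 (w 0) (ex_intro _ (w 1) h01) (w 1) (w 1).
have [i ik zi] := max_nbr sym Pw M hz1; subst z1.
have [z2 [hz2 z21 z2i]] := D3 (w 0) (ex_intro _ (w 1) h01) (w 1) (w i).
have [j jk zj] := max_nbr sym Pw M hz2; subst z2.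
have i0 : i != 0 by apply/eqP => E; move: hz1; rewrite E irr.
have j0 : j != 0 by apply/eqP => E; move: hz2; rewrite E irr.
rewrite weq in z11; try lia. rewrite weq in z21; try lia. rewrite weq in z2i; try lia.
have [a [b [a2 ab bk ha hb]]] : exists a b, [/\ 2 <= a, a < b, b <= k, h (w 0) (w a) & h (w 0) (w b)].
  case: (ltnP i j) => H.
    exists i, j; split=> //; lia.
  exists j, i; split=> //; lia.
have Pq := rot_path sym Pw (a:=a) ltac:(lia) ha.
have Mq : forall k' w', ipath h k' w' -> k' <= k := M.
have ha1 : h (w (rotf a 0)) (w (rotf a 1)).
  case: Pq => Pqe _; apply: Pqe; lia.
have [z [hz za2 za]] := D3 (w (rotf a 0)) (ex_intro _ (w (rotf a 1)) ha1) (w (a - 2)) (w a).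
have [d' d'k zd] := max_nbr sym Pq Mq hz.
set d := rotf a d' in zd.
have dk : d <= k by apply: rot_in; lia.
have r0 : rotf a 0 = a.-1 by rewrite /rotf; case: ifP; lia.
rewrite r0 in hz; subst z.
have da1 : d != a.-1 by apply/eqP => E; move: hz; rewrite E irr.
rewrite weq in za2; try lia. rewrite weq in za; try lia.
have Pe' := ipath_sub he Pw.
have esym : forall x y, h x y -> e y x by move=> x y H; apply: he; rewrite sym.
case: (ltnP b d) => db.
-
  have Pqe := ipath_sub he Pq.
  have rd : rotf a d = d by rewrite /rotf; case: ifP; lia.
  have ra1 : rotf a a.-1 = 0 by rewrite /rotf; case: ifP; lia.
  have rb : rotf a b = b by rewrite /rotf; case: ifP; lia.
  have ra : rotf a a = a by rewrite /rotf; case: ifP; lia.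
  apply: (dcc_prefix (k:=k) (w := fun i => w (rotf a i)) (c := d) (i1 := a.-1) (j1 := b) (i2 := 0) (j2 := a)) => //=; rewrite ?rd ?ra1 ?rb ?ra ?r0; try lia.
  + by apply: esym.
  + by apply: he.
  + by apply: he; have := Pe a.-1 ltac:(lia); have -> : a.-1.+1 = a by lia.
- case: (ltnP a d) => ad.
  + apply: (dcc_prefix (k:=k) (w := w) (c := b) (i1 := 0) (j1 := a) (i2 := a.-1) (j2 := d)) => //; try lia.
    * by apply: esym.
    * by apply: he.
    * by apply: he.
  + apply: (dcc_prefix (k:=k) (w := w) (c := b) (i1 := 0) (j1 := a) (i2 := d) (j2 := a.-1)) => //; try lia.
    * by apply: esym.
    * by apply: he.
    * by apply: esym.
Qed.

Lemma deg2_dcc n (e h : rel 'I_n) (j : 'I_n) : symmetric e -> irreflexive e ->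
  symmetric h -> irreflexive h ->
  (forall x y, h x y -> e x y) -> (forall x y, h x y -> e j x) -> (exists x y, h x y) ->
  (forall x, (exists y, h x y) -> forall y1, exists z, h x z /\ z != y1) ->
  has_doubly_chorded_cycle e.
Proof.
move=> esym eirr sym irr he hj ex D2.
have [k [w [Pw k0 M]]] := longest irr ex.
have Pw' := Pw; case: Pw' => [Pe Pi].
have weq a b : a <= k -> b <= k -> (w a == w b) = (a == b).
  move=> ac bc; apply/eqP/eqP => [E|->] //; apply: Pi E; lia.
have h01 := Pe 0 k0.
have [z [hz z1]] := D2 (w 0) (ex_intro _ (w 1) h01) (w 1).
have [b bk zb] := max_nbr sym Pw M hz; subst z.
have b0 : b != 0 by apply/eqP => E; move: hz; rewrite E irr.
rewrite weq in z1; try lia.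
have ej i : i <= k -> e j (w i).
  move=> ik; case: (ltnP i k) => H.
    by apply: (hj _ (w i.+1)); apply: Pe.
  have -> : i = k.-1.+1 by lia.
  by apply: (hj _ (w k.-1)); rewrite sym; apply: Pe; lia.
set w' := fun i => if i is i'.+1 then w i' else j.
have Pw2 : ipath e k.+1 w'.
  split.
    case=> [|i] /= ik; first by apply: ej.
    by apply: he; apply: Pe.
  case=> [|i] [|i'] //= Hi Hi'.
  - move=> E; have := ej i' ltac:(lia); rewrite -E eirr //.
  - move=> E; have := ej i ltac:(lia); rewrite E eirr //.
  - by move=> /Pi ->.
apply: (dcc_prefix (k:=k.+1) (w := w') (c := b.+1) (i1 := 0) (j1 := 2) (i2 := 1) (j2 := b.+1)) => //=; try lia.
- by rewrite esym; apply: ej.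
- by apply: ej; lia.
- by apply: he.
Qed.


Definition degS n (h : rel 'I_n) (S : {set 'I_n}) x := \sum_(y in S) (h x y : nat).
Definition Dsum n (h : rel 'I_n) (S : {set 'I_n}) := \sum_(x in S) degS h S x.

Lemma degS_card n (h : rel 'I_n) (S : {set 'I_n}) x : degS h S x = #|[set y | (y \in S) && h x y]|.
Proof.
rewrite /degS -sum1dep_card big_mkcondr /=.
by apply: eq_bigr => y _; case: (h x y).
Qed.

Lemma degS_le n (h : rel 'I_n) (S : {set 'I_n}) x : irreflexive h -> x \in S -> degS h S x <= #|S|.-1.
Proof.
move=> irr xS; rewrite degS_card (cardsD1 x S) xS add1n /=.
apply: subset_leq_card; 
apply/fintype.subsetP => y; rewrite !inE => /andP[yS hy].
rewrite yS andbT; apply/eqP => E; by rewrite E irr in hy.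
Qed.

Lemma Dsum_le n (h : rel 'I_n) (S : {set 'I_n}) : irreflexive h -> Dsum h S <= #|S| * #|S|.-1.
Proof.
move=> irr; rewrite /Dsum -sum_nat_const; apply: leq_sum => x xS; exact: degS_le.
Qed.

Lemma Dsum_del n (h : rel 'I_n) (S : {set 'I_n}) x : symmetric h -> irreflexive h -> x \in S ->
  Dsum h S = Dsum h (S :\ x) + 2 * degS h S x.
Proof.
move=> sym irr xS.
have E1 : forall y, y \in S -> y != x -> degS h S y = degS h (S :\ x) y + (h y x : nat).
  move=> y yS yx; rewrite /degS (bigD1 x xS) /= addnC; congr (_ + _).
  by apply: eq_bigl => z; rewrite !inE andbC.
rewrite /Dsum (bigD1 x xS) /=.
have -> : \sum_(i in S | i != x) degS h S i = \sum_(i in S :\ x) degS h (S :\ x) i + \sum_(i in S :\ x) (h x i : nat).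
  rewrite -big_split /=; rewrite [in RHS](eq_bigl (fun i => (i \in S) && (i != x))); last first.
    by move=> i; rewrite !inE andbC.
  by apply: eq_bigr => i /andP[iS ix]; rewrite E1 // sym.
have -> : \sum_(i in S :\ x) (h x i : nat) = degS h S x.
  rewrite /degS (bigD1 x xS) /= irr add0n.
  by apply: eq_bigl => z; rewrite !inE andbC.
by rewrite addnCA addnn -mul2n.
Qed.

Lemma extremal n (e h : rel 'I_n) : symmetric h -> irreflexive h ->
  (forall x y, h x y -> e x y) -> ~ has_doubly_chorded_cycle e ->
  forall S : {set 'I_n}, 2 <= #|S| -> Dsum h S + 6 <= 4 * #|S|.
Proof.
move=> sym irr he nD S; move Hm: #|S| => m; elim: m S Hm => [|m IH] S Hm m2; first by [].
case: (leqP m.+1 3) => m3.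
  have := Dsum_le S irr; rewrite Hm.
  have : m = 1 \/ m = 2 by lia.
  by case=> ->; lia.
case: (classic (exists2 x, x \in S & degS h S x <= 2)) => [[x xS dx]|N].
  rewrite (Dsum_del sym irr xS).
  have c1 : #|S :\ x| = m by move: (cardsD1 x S); rewrite xS Hm add1n => -[].
  have := IH _ c1 ltac:(lia); lia.
exfalso; apply: nD.
pose hS := fun x y => [&& h x y, x \in S & y \in S].
have degN : forall x, x \in S -> 3 <= degS h S x.
  move=> x xS; rewrite ltnNge; apply/negP => H; apply: N; by exists x.
apply: (deg3_dcc (h := hS)).
- by move=> x y; rewrite /hS sym; case: (x \in _); case: (y \in _); rewrite ?andbT ?andbF.
- by move=> x; rewrite /hS irr.
- by move=> x y /and3P[/he].
- have : 0 < #|S| by lia.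
  rewrite card_gt0 => /set0Pn [x xS].
  have := degN x xS; rewrite degS_card => H.
  have : 0 < #|[set y | (y \in S) && h x y]| by lia.
  rewrite card_gt0 => /set0Pn [y].
  by rewrite inE => /andP[yS hy]; exists x, y; rewrite /hS hy xS yS.
- move=> x [y0 /and3P[_ xS _]] y1 y2.
  apply: NNPP => NZ.
  have := degN x xS; rewrite degS_card.
  have : [set y | (y \in S) && h x y] \subset [set y1; y2].
    apply/fintype.subsetP => z; rewrite !inE => /andP[zS hz].
    apply: NNPP => nz; apply: NZ; exists z; split.
    + by rewrite /hS hz xS zS.
    + by apply/negP => /eqP E; apply: nz; rewrite E eqxx.
    + by apply/negP => /eqP E; apply: nz; rewrite E eqxx orbT.
  move/subset_leq_card; rewrite cards2; case: (y1 != y2); lia.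
Qed.

Lemma forest n (e : rel 'I_n) j : symmetric e -> irreflexive e ->
  ~ has_doubly_chorded_cycle e ->
  forall T : {set 'I_n}, T \subset [set y | e j y] -> 0 < #|T| -> Dsum e T + 2 <= 2 * #|T|.
Proof.
move=> sym irr nD T; move Hm: #|T| => m; elim: m T Hm => [|m IH] T Hm TN m1; first by [].
case: (leqP m.+1 1) => m3.
  have := Dsum_le T irr; rewrite Hm.
  have -> : m = 0 by lia.
  lia.
case: (classic (exists2 x, x \in T & degS e T x <= 1)) => [[x xT dx]|N].
  rewrite (Dsum_del sym irr xT).
  have c1 : #|T :\ x| = m by move: (cardsD1 x T); rewrite xT Hm add1n => -[].
  have sub : T :\ x \subset [set y | e j y].
    apply/fintype.subsetP => y; rewrite !inE => /andP[_ yT]; by move/fintype.subsetP: TN => /(_ y yT); rewrite inE.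
  have := IH _ c1 sub ltac:(lia); lia.
exfalso; apply: nD.
pose hS := fun x y => [&& e x y, x \in T & y \in T].
have degN : forall x, x \in T -> 2 <= degS e T x.
  move=> x xT; rewrite ltnNge; apply/negP => H; apply: N; by exists x.
apply: (deg2_dcc (h := hS) (j := j)) => //.
- by move=> x y; rewrite /hS sym; case: (x \in _); case: (y \in _); rewrite ?andbT ?andbF.
- by move=> x; rewrite /hS irr.
- by move=> x y /and3P[].
- move=> x y /and3P[_ xT _]; by move/fintype.subsetP: TN => /(_ x xT); rewrite inE.
- have : 0 < #|T| by lia.
  rewrite card_gt0 => /set0Pn [x xT].
  have := degN x xT; rewrite degS_card => H.
  have : 0 < #|[set y | (y \in T) && e x y]| by lia.
  rewrite card_gt0 => /set0Pn [y].
  by rewrite inE => /andP[yT hy]; exists x, y; rewrite /hS hy xT yT.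
- move=> x [y0 /and3P[_ xT _]] y1.
  apply: NNPP => NZ.
  have := degN x xT; rewrite degS_card.
  have : [set y | (y \in T) && e x y] \subset [set y1].
    apply/fintype.subsetP => z; rewrite !inE => /andP[zT hz].
    apply: NNPP => nz; apply: NZ; exists z; split.
    + by rewrite /hS hz xT zT.
    + by apply/negP => /eqP E; apply: nz; rewrite E eqxx.
  move/subset_leq_card; rewrite cards1; lia.
Qed.


Definition deg n (e : rel 'I_n) x := \sum_(y : 'I_n) (e x y : nat).

Lemma deg_card n (e : rel 'I_n) x : deg e x = #|[set y | e x y]|.
Proof.
rewrite /deg -sum1dep_card [RHS]big_mkcond /=.
by apply: eq_bigr => y _; case: (e x y).
Qed.

Lemma sum_in n (N : {set 'I_n}) (F : 'I_n -> nat) :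
  \sum_(i in N) F i = \sum_i (i \in N) * F i.
Proof. by rewrite big_mkcond /=; apply: eq_bigr => i _; case: (i \in N); rewrite ?mul1n. Qed.

Lemma s_bound n (e : rel 'I_n) j : 2 <= n -> symmetric e -> irreflexive e ->
  ~ has_doubly_chorded_cycle e ->
  \sum_i (e j i : nat) * deg e i + 4 <= 2 * n + deg e j.
Proof.
move=> n2 sym irr nD.
set N := [set y | e j y].
have -> : \sum_i (e j i : nat) * deg e i = \sum_(i in N) deg e i.
  by rewrite sum_in; apply: eq_bigr => i _; rewrite inE.
have dj : deg e j = #|N| by rewrite deg_card.
rewrite dj.
pose h := fun x y => e x y && ((x \in N) || (y \in N)).
have S1 : \sum_(i in N) deg e i = \sum_i \sum_y (i \in N) * (e i y : nat).
  by rewrite sum_in; apply: eq_bigr => i _; rewrite /deg big_distrr.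
have S2 : \sum_(i in N) deg e i = \sum_i \sum_y (y \in N) * (e i y : nat).
  rewrite S1 exchange_big /=; apply: eq_bigr => i _; apply: eq_bigr => y _.
  by rewrite sym.
have S3 : Dsum h [set: 'I_n]%SET = \sum_i \sum_y (h i y : nat).
  rewrite /Dsum /degS; apply: eq_big => [i|i _]; first by rewrite finset.in_setT.
  by apply: eq_bigl => y; rewrite finset.in_setT.
have S4 : Dsum e N = \sum_i \sum_y (i \in N) * ((y \in N) * (e i y : nat)).
  rewrite /Dsum sum_in; apply: eq_bigr => i _; rewrite /degS sum_in big_distrr //.
have key : 2 * \sum_(i in N) deg e i = Dsum h [set: 'I_n]%SET + Dsum e N.
  rewrite mul2n -addnn {1}S1 S2 S3 S4 -!big_split /=; apply: eq_bigr => i _.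
  rewrite -!big_split /=; apply: eq_bigr => y _; rewrite /h.
  by case: (i \in N); case: (y \in N); case: (e i y).
have hsym : symmetric h.
  by move=> x y; rewrite /h sym orbC.
have hirr : irreflexive h by move=> x; rewrite /h irr.
have B1 := extremal hsym hirr (fun x y (H : h x y) => proj1 (andP H)) nD (S := [set: 'I_n]%SET).
rewrite cardsT card_ord in B1; have {}B1 := B1 n2.
case: (posnP #|N|) => N0.
  have -> : N = finset.set0 by apply/eqP; rewrite -cards_eq0 N0.
  rewrite big_set0; lia.
have F := forest sym irr nD (subxx N) N0.
move: key B1 F; set A := Dsum h _; set B := Dsum e N; set C := \sum_(i in N) _.
set K := #|N|.
lia.
Qed.


Lemma deg_le n (e : rel 'I_n) x : irreflexive e -> deg e x <= n.-1.
Proof.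
move=> irr; rewrite deg_card.
have := cardsC1 x; rewrite card_ord => <-.
apply: subset_leq_card; apply/fintype.subsetP => y; rewrite !inE => hy.
by apply/eqP => E; rewrite E irr in hy.
Qed.

Lemma deg_full n (e : rel 'I_n) x y : irreflexive e -> deg e x = n.-1 -> y != x -> e x y.
Proof.
move=> irr dx yx; apply: NNPP => /negP ny.
have : #|[set z | e x z]| <= #|[set~ x] :\ y|.
  apply: subset_leq_card; apply/fintype.subsetP => z; rewrite !inE => hz.
  apply/andP; split; first by apply/eqP => E; rewrite E in hz; rewrite hz in ny.
  by apply/eqP => E; rewrite E irr in hz.
have := cardsD1 y [set~ x]; rewrite !inE yx /= add1n cardsC1 card_ord.
rewrite -deg_card dx => H1 H2.
have : n.-1 <= #|[set~ x] :\ y| by [].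
lia.
Qed.

Lemma sdeg_nbr n (e : rel 'I_n) v : \sum_i (e v i : nat) * deg e i = \sum_(i in [set y | e v y]) deg e i.
Proof. by rewrite sum_in; apply: eq_bigr => i _; rewrite inE. Qed.

Lemma eq_iso n (e : rel 'I_n) (T : {set 'I_n}) : 3 <= n -> symmetric e -> irreflexive e ->
  ~ has_doubly_chorded_cycle e -> (exists x, x \in T) ->
  (forall x y, x \in T -> e x y -> y \in T) ->
  (forall k, k \in T -> \sum_i (e k i : nat) * deg e i + 4 = 2 * n + deg e k) ->
  graph_iso e (@K11n n).
Proof.
move=> n3 sym irr nD [t tT] Tcl Teq.
have [v vT dv] : exists2 v, v \in T & deg e v <= 2.
  apply: NNPP => N; apply: nD.
  pose hT := fun x y => [&& e x y, x \in T & y \in T].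
  have degN : forall x, x \in T -> 3 <= #|[set y | e x y]|.
    move=> x xT; rewrite -deg_card ltnNge; apply/negP => H; apply: N; by exists x.
  apply: (deg3_dcc (h := hT)).
  - by move=> x y; rewrite /hT sym; case: (x \in _); case: (y \in _); rewrite ?andbT ?andbF.
  - by move=> x; rewrite /hT irr.
  - by move=> x y /and3P[].
  - have := degN t tT => H.
    have : 0 < #|[set y | e t y]| by lia.
    rewrite card_gt0 => /set0Pn [y]; rewrite inE => hy.
    by exists t, y; rewrite /hT hy tT (Tcl _ _ tT hy).
  - move=> x [y0 /and3P[_ xT _]] y1 y2.
    apply: NNPP => NZ.
    have := degN x xT.
    have : [set y | e x y] \subset [set y1; y2].
      apply/fintype.subsetP => z; rewrite !inE => hz.
      apply: NNPP => nz; apply: NZ; exists z; split.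
      + by rewrite /hT hz xT (Tcl _ _ xT hz).
      + by apply/negP => /eqP E; apply: nz; rewrite E eqxx.
      + by apply/negP => /eqP E; apply: nz; rewrite E eqxx orbT.
    move/subset_leq_card; rewrite cards2; case: (y1 != y2); lia.
have ev := Teq v vT; rewrite sdeg_nbr in ev.
have dvc := deg_card e v.
have dl : forall x, deg e x <= n.-1 by move=> x; apply: deg_le.
have : deg e v = 0 \/ deg e v = 1 \/ deg e v = 2 by lia.
case=> [d0|[d1|d2]].
- have : [set y | e v y] = finset.set0 by apply/eqP; rewrite -cards_eq0 -dvc d0.
  move=> E; rewrite E big_set0 in ev; lia.
- have : #|[set y | e v y]| == 1 by rewrite -dvc d1.
  case/cards1P => u E; rewrite E big_set1 in ev; simpl in ev; have := dl u; lia.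
have : #|[set y | e v y]| == 2 by rewrite -dvc d2.
case/cards2P => u [w [uw E]]; rewrite E big_setU1 ?inE // big_set1 in ev.
simpl in ev.
have du : deg e u = n.-1 by have := dl u; have := dl w; lia.
have dw : deg e w = n.-1 by have := dl u; have := dl w; lia.
clear E.
have eu : forall y, y != u -> e u y by move=> y; apply: deg_full.
have ew : forall y, y != w -> e w y by move=> y; apply: deg_full.
have noe : forall x y, x != u -> x != w -> y != u -> y != w -> ~~ e x y.
  move=> x y xu xw yu yw; apply/negP => exy; apply: nD.
  have xy : x != y by apply/eqP => E; rewrite E irr in exy.
  pose w' := fun i => match i with 0 => u | 1 => x | 2 => y | _ => w end.
  have Pw : ipath e 3 w'.
    split.
      case=> [|[|[|i]]] //= _.
      - by apply: eu.
      - by rewrite sym; apply: ew.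
    have ne : forall a b : 'I_n, a != b -> a = b -> False by move=> a b /eqP.
    case=> [|[|[|[|i]]]] [|[|[|[|j]]]] //= _ _ => Eq; exfalso;
      by [ apply: (ne _ _ xu); rewrite Eq | apply: (ne _ _ xu); rewrite -Eq
         | apply: (ne _ _ yu); rewrite Eq | apply: (ne _ _ yu); rewrite -Eq
         | apply: (ne _ _ uw); rewrite Eq | apply: (ne _ _ uw); rewrite -Eq
         | apply: (ne _ _ xy); rewrite Eq | apply: (ne _ _ xy); rewrite -Eq
         | apply: (ne _ _ xw); rewrite Eq | apply: (ne _ _ xw); rewrite -Eq
         | apply: (ne _ _ yw); rewrite Eq | apply: (ne _ _ yw); rewrite -Eq ].
  apply: (dcc_prefix (k:=3) (w:=w') (c:=3) (i1:=0) (j1:=2) (i2:=1) (j2:=3)) => //=.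
  - by apply: ew.
  - by apply: eu.
  - by rewrite sym; apply: ew.
have echar : forall x y, e x y = (x != y) && [|| x == u, x == w, y == u | y == w].
  move=> x y; case: (eqVneq x y) => [->|xy]; first by rewrite irr.
  case: (eqVneq x u) => [Ex|xu].
    by subst x; rewrite eu //; rewrite eq_sym.
  case: (eqVneq x w) => [Ex|xw].
    by subst x; rewrite ew ?orbT //; rewrite eq_sym.
  case: (eqVneq y u) => [Ey|yu].
    by subst y; rewrite sym eu ?orbT.
  case: (eqVneq y w) => [Ey|yw].
    by subst y; rewrite sym ew ?orbT.
  rewrite /=; apply/negbTE/noe => //.
have n0 : 0 < n by lia.
have n1 : 1 < n by lia.
pose o0 := Ordinal n0; pose o1 := Ordinal n1.
pose t1 := tperm u o0; pose w1 := t1 w; pose t2 := tperm o1 w1.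
pose f := fun x => t2 (t1 x).
have fK : cancel f (fun x => t1 (t2 x)) by move=> x; rewrite /f !tpermK.
have Kf : cancel (fun x => t1 (t2 x)) f by move=> x; rewrite /f !tpermK.
have finj : injective f := can_inj fK.
have w1o0 : w1 != o0.
  apply/eqP => E; move: uw; rewrite -(tpermK u o0 w) -/t1 -/w1 E -(tpermL u o0) tpermK eqxx //.
have fu : f u = o0.
  by rewrite /f /t1 tpermL /t2 tpermD.
have fw : f w = o1 by rewrite /f -/w1 /t2 tpermR.
have small : forall a : 'I_n, (val a < 2) = (a == o0) || (a == o1).
  by case=> [[|[|a]] Ha].
exists f; split; first by exists (fun x => t1 (t2 x)).
move=> i j; rewrite /K11n !small -fu -fw !(inj_eq finj) echar.
by rewrite -!orbA.
Qed.

Local Open Scope ring_scope.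

Lemma spectral (R : realType) n (e : rel 'I_n) (a : R) : (3 <= n)%N ->
  symmetric e ->
  (forall j, (\sum_i (e j i : nat) * deg e i + 4 <= 2 * n + deg e j)%N) ->
  1 <= a -> eigenvalue (adjmx R e) a ->
  a * (a - 1) <= (2 * n)%:R - 4 /\
  (a * (a - 1) = (2 * n)%:R - 4 -> exists2 T : {set 'I_n}, (exists x, x \in T) &
     ((forall x y, x \in T -> e x y -> y \in T) /\
      (forall k, k \in T -> \sum_i (e k i : nat) * deg e i + 4 = 2 * n + deg e k)%N)).
Proof.
move=> n3 sym sb a1 /eigenvalueP [v vE v0].
pose y i := `|v 0 i|.
pose E i j : R := (e i j)%:R.
have Esym i j : E i j = E j i by rewrite /E sym.
have Ege0 i j : 0 <= E i j by rewrite /E ler0n.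
have yge0 i : 0 <= y i by rewrite /y normr_ge0.
have eq1 j : a * v 0 j = \sum_i v 0 i * E i j.
  have := congr1 (fun M : 'rV[R]_n => M 0 j) vE; rewrite !mxE => <-.
  by apply: eq_bigr => i _; rewrite /adjmx mxE.
pose z j := \sum_i y i * E i j.
have zge j : a * y j <= z j.
  rewrite /y -(ger0_norm (le_trans ler01 a1)) -normrM eq1.
  apply: le_trans (ler_norm_sum _ _ _) _; apply: ler_sum => i _.
  by rewrite normrM (ger0_norm (Ege0 i j)).
pose d i : R := (deg e i)%:R.
have dE i : d i = \sum_j E i j by rewrite /d /deg natr_sum.
pose S k : R := \sum_i E k i * d i.
have SE k : S k = (\sum_i (e k i : nat) * deg e i)%N%:R.
  by rewrite natr_sum; apply: eq_bigr => i _; rewrite natrM.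
pose c : R := (2 * n)%:R - 4.
have sk k : S k - d k <= c.
  have := sb k; rewrite -(ler_nat R) natrD SE /c natrD /d => H.
  by rewrite lerBlDr addrAC lerBrDr.
have id1 : \sum_k y k * S k = \sum_i d i * z i.
  rewrite /S /z; under eq_bigr do rewrite big_distrr /=.
  rewrite exchange_big /=; apply: eq_bigr => i _; rewrite big_distrr /=.
  by apply: eq_bigr => k _; rewrite mulrA mulrC.
have id2 : \sum_k y k * d k = \sum_j z j.
  rewrite /z; under eq_bigr do rewrite dE big_distrr /=.
  by rewrite exchange_big.
have ineq3 : a * \sum_j z j <= \sum_i d i * z i.
  rewrite mulr_sumr.
  have -> : \sum_i d i * z i = \sum_j \sum_i E i j * z i.
    under eq_bigr do rewrite dE mulr_suml.
    by rewrite exchange_big /=; apply: eq_bigr => j _; apply: eq_bigr => i _; rewrite Esym.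
  apply: ler_sum => j _; rewrite /z mulr_sumr; apply: ler_sum => i _.
  by rewrite mulrA mulrC ler_wpM2l.
have zsum : a * \sum_j y j <= \sum_j z j.
  by rewrite mulr_sumr; apply: ler_sum => j _.
pose Y := \sum_j y j.
have Ypos : 0 < Y.
  have [i vi] : exists i, v 0 i != 0.
    apply: NNPP => N; apply: (negP v0); apply/eqP/rowP => i.
    rewrite mxE; apply/eqP; apply: NNPP => H; apply: N; by exists i; apply/negP.
  rewrite /Y (bigD1 i) //=.
  have H1 : 0 < y i by rewrite /y normr_gt0.
  have H2 : 0 <= \sum_(j < n | j != i) y j by apply: sumr_ge0.
  lra.
have Ssum_lo : (a - 1) * \sum_j z j <= \sum_k y k * (S k - d k).
  under [X in _ <= X]eq_bigr do rewrite mulrBr.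
  rewrite sumrB id1 id2 mulrBl mul1r; lra.
have Ssum_hi : \sum_k y k * (S k - d k) <= c * Y.
  rewrite /Y mulr_sumr; apply: ler_sum => k _; rewrite [c * _]mulrC ler_wpM2l //.
have chain1 : a * (a - 1) * Y <= (a - 1) * \sum_j z j.
  have -> : a * (a - 1) * Y = (a - 1) * (a * Y) by rewrite /Y; ring.
  by rewrite ler_wpM2l // subr_ge0.
have main : a * (a - 1) <= c.
  rewrite -(ler_pM2r Ypos); apply: le_trans chain1 _; apply: le_trans Ssum_lo Ssum_hi.
split => // eqc.
have c_pos : 0 < c.
  rewrite /c subr_gt0 -[4]/(4%:R) ltr_nat; lia.
have a_gt1 : 1 < a.
  rewrite lt_neqAle a1 andbT; apply/eqP => a1'; move: c_pos; by rewrite /c -eqc -a1' subrr mulr0 ltxx.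
have EQ1 : \sum_k y k * (c - (S k - d k)) = 0.
  apply/eqP; rewrite eq_le; apply/andP; split.
    under eq_bigr do rewrite mulrBr; rewrite sumrB -mulr_suml -/Y subr_le0.
    have -> : Y * c = a * (a - 1) * Y by rewrite /c -eqc mulrC.
    exact: le_trans chain1 Ssum_lo.
  by apply: sumr_ge0 => k _; rewrite mulr_ge0 // subr_ge0.
have EQ2 : \sum_j (z j - a * y j) = 0.
  apply/eqP; rewrite eq_le; apply/andP; split; last first.
    by apply: sumr_ge0 => j _; rewrite subr_ge0.
  rewrite sumrB -mulr_sumr -/Y subr_le0.
  have H : (a - 1) * \sum_j z j <= (a - 1) * (a * Y).
    apply: le_trans Ssum_lo _; apply: le_trans Ssum_hi _; rewrite /c -eqc.
    by rewrite mulrA [a * _]mulrC.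
  have ap : 0 < a - 1 by rewrite subr_gt0.
  by rewrite (ler_pM2l ap) in H.
have zeq j : z j = a * y j.
  apply/eqP; rewrite -subr_eq0; apply/eqP.
  by apply: (psumr_eq0P _ EQ2) => // i _; rewrite subr_ge0.
have keq k : y k != 0 -> S k - d k = c.
  move=> yk.
  have H0 : forall k, true -> 0 <= y k * (c - (S k - d k)).
    by move=> k0 _; rewrite mulr_ge0 // subr_ge0.
  have := psumr_eq0P H0 EQ1 (i:=k) isT.
  by move/eqP; rewrite mulf_eq0 (negbTE yk) /= subr_eq0 => /eqP ->.
exists [set k | y k != 0].
  apply: NNPP => N; move: Ypos; rewrite /Y big1 ?ltxx // => i _.
  apply/eqP; apply: NNPP => H; apply: N; exists i; rewrite inE; exact/negP.
split.
  move=> x x0; rewrite !inE => yx ex0.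
  have zx : y x <= z x0.
    rewrite /z (bigD1 x) //= /E ex0 mulr1.
    have : 0 <= \sum_(i < n | i != x) y i * (e i x0)%:R.
      by apply: sumr_ge0 => i _; rewrite mulr_ge0.
    lra.
  have yxp : 0 < y x by rewrite lt_def yx yge0.
  rewrite zeq in zx; apply/eqP => y0; rewrite y0 mulr0 in zx; lra.
move=> k; rewrite inE => /keq; rewrite SE /d /c => H.
apply/eqP; rewrite -(eqr_nat R) !natrD -[4%:R]/4; apply/eqP.
lra.
Qed.


Lemma sumR_cond (R : pzRingType) n (P : pred 'I_n) (F : 'I_n -> R) :
  \sum_i F i * (P i)%:R = \sum_(i | P i) F i.
Proof. by rewrite [RHS]big_mkcond; apply: eq_bigr => i _; case: (P i); rewrite ?mulr1 ?mulr0. Qed.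

Lemma iso_eig (R : realType) n (e : rel 'I_n) (b : R) : (3 <= n)%N ->
  graph_iso e (@K11n n) -> b * (b - 1) = (2 * n)%:R - 4 -> 0 < b ->
  eigenvalue (adjmx R e) b.
Proof.
move=> n3 [f [fbij Hf]] hb bpos.
have finj := bij_inj fbij.
pose H := [set i | (val (f i) < 2)%N].
have eH i j : e i j = (i != j) && ((i \in H) || (j \in H)).
  by rewrite -Hf /K11n (inj_eq finj) !inE.
have n0 : (0 < n)%N by lia.
have n1 : (1 < n)%N by lia.
pose o0 := Ordinal n0; pose o1 := Ordinal n1.
have cH : #|H| = 2%N.
  have -> : H = f @^-1: [set o0; o1].
    by apply/setP => i; rewrite !inE; case: (f i) => [[|[|k]] Hk].
  by rewrite card_preimset // cards2.
have cHc : #|~: H| = (n - 2)%N by have := cardsC H; rewrite card_ord cH; lia.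
pose v := \row_i (if i \in H then b / 2 else 1).
apply/eigenvalueP; exists v.
  apply/rowP => j; rewrite !mxE.
  under eq_bigr do rewrite /adjmx !mxE.
  have tot : \sum_i v 0 i = b + (n%:R - 2).
    rewrite (bigID (mem H)) /=.
    under eq_bigr => i iH do rewrite mxE iH.
    under [X in _ + X = _]eq_bigr => i iH do rewrite mxE (negbTE iH).
    rewrite !sumr_const.
    have -> : #|[pred i | i \in H]| = 2%N by rewrite -cH.
    have -> : #|[pred i | i \notin H]| = (n - 2)%N by rewrite -cHc; apply: eq_card => i; rewrite !inE.
    rewrite natrB //; lra.
  case: (boolP (j \in H)) => jH.
    under eq_bigr do rewrite eH jH orbT andbT.
    rewrite sumR_cond.
    have tot' : \sum_i (if i \in H then b / 2 else 1) = b + (n%:R - 2).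
      by rewrite -tot; apply: eq_bigr => i _; rewrite mxE.
    have -> : \sum_(i | i != j) (if i \in H then b / 2 else 1) = b + (n%:R - 2) - b / 2.
      by rewrite -tot' [X in _ = X - _](bigD1 j) //= jH; ring.
    rewrite natrM in hb.
    have -> : b * (b / 2) = (b * (b - 1)) / 2 + b / 2 by field.
    rewrite hb; lra.
  set V := fun i => if i \in H then b / 2 else 1.
  have -> : \sum_i V i * (e i j)%:R = \sum_i V i * (i \in H)%:R.
    apply: eq_bigr => i _; rewrite eH (negbTE jH) orbF; congr (_ * _%:R).
    case: (boolP (i \in H)) => iH; rewrite ?andbF ?andbT //.
    case: (eqVneq i j) => [Eij|//]; by rewrite -Eij iH in jH.
  rewrite sumR_cond.
  under eq_bigr => i iH do rewrite /V iH.
  rewrite sumr_const.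
  have -> : #|[pred i | i \in H]| = 2%N by rewrite -cH.
  lra.
apply/negP => /eqP v0.
have := congr1 (fun M : 'rV[R]_n => M 0 o0) v0; rewrite !mxE.
case: ifP => _ E; lra.
Qed.

Unset Implicit Arguments.

Theorem theorem1p1 (R : realType) (n : nat) (e : rel 'I_n) :
  (3 <= n)%N -> simple_graph e -> ~ has_doubly_chorded_cycle e ->
  spec_rad R e <= 2^-1 + Num.sqrt (2 * n%:R - 15 / 4) /\
  (spec_rad R e = 2^-1 + Num.sqrt (2 * n%:R - 15 / 4) <-> graph_iso e (@K11n n)).
Proof.
move=> n3 [sym irr] nD.
set q := 2 * n%:R - 15 / 4.
set B := 2^-1 + Num.sqrt q.
have n3R : (3 : R) <= n%:R by rewrite (ler_nat R 3 n).
have q1 : 1 <= q by rewrite /q; lra.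
have sq1 : 1 <= Num.sqrt q by rewrite -sqrtr1 ler_sqrt //; lra.
have B1 : 1 <= B by rewrite /B; lra.
have sb : forall j, (\sum_i (e j i : nat) * deg e i + 4 <= 2 * n + deg e j)%N.
  by move=> j; apply: s_bound => //; lia.
have cE : ((2 * n)%:R : R) - 4 = q - 4^-1 by rewrite /q natrM; field.
have sqE : forall a : R, (a - 2^-1) ^+ 2 = a * (a - 1) + 4^-1 by move=> a; field.
have ub : forall a, eigenvalue (adjmx R e) a -> a <= B /\ (a = B -> a * (a - 1) = (2 * n)%:R - 4).
  move=> a ea; case: (lerP 1 a) => a1; last by split; [lra | move=> aB; lra].
  have [H1 _] := spectral n3 sym sb a1 ea.
  split.
    have : (a - 2^-1) ^+ 2 <= q by rewrite sqE; lra.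
    rewrite -(ler_sqrt _ (le_trans ler01 q1)) sqrtr_sqr => H.
    have := ler_norm (a - 2^-1); rewrite /B; lra.
  move=> aB.
  have : (a - 2^-1) ^+ 2 = q by rewrite aB /B addrC addKr sqr_sqrtr //; lra.
  rewrite sqE cE; lra.
set S := [set a : R | eigenvalue (adjmx R e) a]%classic.
have ubS : ubound S B by move=> a Sa; case: (ub a Sa).
have part1 : spec_rad R e <= B.
  rewrite /spec_rad -/S; case: (classic (S !=set0)%classic) => [ne|emp].
    by apply: ge_sup.
  by rewrite sup_out; [lra | case].
split => //; split.
- move=> eqB.
  case: (classic (exists a, S a /\ a = B)) => [[a [Sa aB]] | N].
    have eqc := (ub a Sa).2 aB.
    have a1 : 1 <= a by rewrite aB.
    have [_ H] := spectral n3 sym sb a1 Sa.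
    have [T Tne [Tcl Teq]] := H eqc.
    exact: eq_iso n3 sym irr nD Tne Tcl Teq.
  exfalso.
  have ne : (S !=set0)%classic.
    apply: NNPP => emp; move: eqB; rewrite /spec_rad -/S sup_out; [lra | by case].
  have hs : has_sup S by split => //; exists B.
  have adh : forall M, M < B -> exists2 x, S x & M < x /\ x < B.
    move=> M MB.
    have [x Sx hx] := sup_adherent (eps := B - M) ltac:(lra) hs.
    move: eqB; rewrite /spec_rad -/S => eqB; rewrite eqB in hx.
    exists x => //; split; first lra.
    have := ubS x Sx; rewrite le_eqVlt => /orP [/eqP xB|//].
    by exfalso; apply: N; exists x.
  set p := char_poly (adjmx R e).
  have gen : forall m, exists rs : seq R, exists M,
      [/\ uniq rs, all (root p) rs, size rs = m, M < B & all (fun r => r <= M) rs].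
    elim => [|m [rs [M [u r s MB le]]]].
      by exists [::], (B - 1); split => //; lra.
    have [x Sx [Mx xB]] := adh M MB.
    exists (x :: rs), x; split => //=.
    - rewrite u andbT; apply/negP => xin; have := allP le x xin; lra.
    - by rewrite r andbT -eigenvalue_root_char.
    - by rewrite s.
    - rewrite lexx /=; apply/allP => r0 rin; have := allP le r0 rin; lra.
  have [rs [M [u r s _ _]]] := gen (size p).
  have := max_poly_roots (monic_neq0 (char_poly_monic _)) r u.
  by rewrite s ltnn.
- move=> iso.
  have eqc : B * (B - 1) = (2 * n)%:R - 4.
    have : (B - 2^-1) ^+ 2 = q by rewrite /B addrC addKr sqr_sqrtr //; lra.
    rewrite sqE cE; lra.
  have SB : S B := iso_eig n3 iso eqc ltac:(lra).
  apply: le_anti; rewrite part1 /=.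
  rewrite /spec_rad -/S; apply: sup_upper_bound => //; split; first by exists B.
  by exists B.
Qed.
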